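(* Let $G$ be a finite group generated by reflections of a real Euclidean space $V$ with root system $R$. For any special involution $\sigma\in G$, the centraliser $C(\sigma)=\{g\in G:g\sigma=\sigma g\}$ coincides with the product $G_1\times G_2$ of the corresponding Coxeter subgroups.
   Context: For an involution $\sigma\in G$ (including the identity), let $V_1=\{v:\sigma v=-v\}$ and $V_2=\{v:\sigma v=v\}$, $R_i=R\cap V_i$, and $G_i$ the subgroup of $G$ generated by the reflections in the roots of $R_i$ ($i=1,2$); $G_1$ and $G_2$ commute and intersect trivially, so $G_1G_2\cong G_1\times G_2$. The involution $\sigma$ is called special if for every root $a\in R$ at least one of the orthogonal projections of $a$ onto $V_1$ and onto $V_2$ is proportional to a root from $R_1$ or $R_2$. *)

(* Defs.v *)
From HB Require Import structures.
From mathcomp Require Import all_boot all_order all_algebra.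
From mathcomp Require Import reals.
Set Implicit Arguments. Unset Strict Implicit. Unset Printing Implicit Defensive.
Import Order.TTheory GRing.Theory Num.Theory.
Local Open Scope ring_scope.

(* Euclidean space V = 'rV[R]_n with standard inner product.
   Linear maps act on the right: g applied to v is  v *m g. *)
Definition dotv (R : nzRingType) (n : nat) (u v : 'rV[R]_n) : R := (u *m v^T) 0 0.

(* orthogonal reflection s_a : v |-> v - 2 (v,a)/(a,a) a *)
Definition refl (R : fieldType) (n : nat) (a : 'rV[R]_n) : 'M[R]_n :=
  1%:M - (2 / dotv a a) *: (a^T *m a).

Definition prodmx (R : nzRingType) (n : nat) (s : seq 'M[R]_n) : 'M[R]_n :=
  foldr mulmx 1%:M s.

(* membership in the group generated by a set S of involutions (here:
   reflections, which are their own inverses): finite products of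
   elements of S *)
Definition genmx (R : nzRingType) (n : nat) (S : seq 'M[R]_n) (g : 'M[R]_n) : Prop :=
  exists s : seq 'M[R]_n, all (fun x => x \in S) s /\ g = prodmx s.

Definition root_system (R : fieldType) (n : nat) (rs : seq 'rV[R]_n) : Prop :=
  (forall a, a \in rs -> a != 0) /\
  (forall a b, a \in rs -> b \in rs -> b *m refl a \in rs).

Definition reflgroup (R : fieldType) (n : nat) (rs : seq 'rV[R]_n) (g : 'M[R]_n) : Prop :=
  genmx [seq refl a | a <- rs] g.

Definition V1 (R : nzRingType) (n : nat) (sigma : 'M[R]_n) (v : 'rV[R]_n) : Prop :=
  v *m sigma = - v.
Definition V2 (R : nzRingType) (n : nat) (sigma : 'M[R]_n) (v : 'rV[R]_n) : Prop :=
  v *m sigma = v.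

Definition roots1 (R : nzRingType) (n : nat) (rs : seq 'rV[R]_n) (sigma : 'M[R]_n) :=
  [seq a <- rs | a *m sigma == - a].
Definition roots2 (R : nzRingType) (n : nat) (rs : seq 'rV[R]_n) (sigma : 'M[R]_n) :=
  [seq a <- rs | a *m sigma == a].

Definition G1 (R : fieldType) (n : nat) (rs : seq 'rV[R]_n) (sigma g : 'M[R]_n) : Prop :=
  reflgroup (roots1 rs sigma) g.
Definition G2 (R : fieldType) (n : nat) (rs : seq 'rV[R]_n) (sigma g : 'M[R]_n) : Prop :=
  reflgroup (roots2 rs sigma) g.

Definition is_orth_proj (R : nzRingType) (n : nat) (P : 'rV[R]_n -> Prop)
  (a w : 'rV[R]_n) : Prop :=
  P w /\ forall u, P u -> dotv (a - w) u = 0.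

Definition prop_to_root (R : nzRingType) (n : nat) (S : seq 'rV[R]_n) (w : 'rV[R]_n) : Prop :=
  exists b c, b \in S /\ w = c *: b.

Definition special (R : nzRingType) (n : nat) (rs : seq 'rV[R]_n) (sigma : 'M[R]_n) : Prop :=
  forall a, a \in rs ->
    (exists w, is_orth_proj (V1 sigma) a w /\
       (prop_to_root (roots1 rs sigma) w \/ prop_to_root (roots2 rs sigma) w)) \/
    (exists w, is_orth_proj (V2 sigma) a w /\
       (prop_to_root (roots1 rs sigma) w \/ prop_to_root (roots2 rs sigma) w)).

(* Main.v *)
Require Import Defs.
From HB Require Import structures.
From mathcomp Require Import all_boot all_order all_algebra.
From mathcomp Require Import reals.
From mathcomp Require Import ring lra zify.
From Stdlib Require Import Classical.
Require Import Defs.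
Set Implicit Arguments. Unset Strict Implicit. Unset Printing Implicit Defensive.
Import Order.TTheory GRing.Theory Num.Theory.
Local Open Scope ring_scope.

Section Basics.
Variables (R : realType) (n : nat).
Implicit Types (u v a b : 'rV[R]_n) (M : 'M[R]_n).

Lemma dotvE u v : dotv u v = \sum_i u 0 i * v 0 i.
Proof. by rewrite /dotv !mxE; apply: eq_bigr => i _; rewrite mxE. Qed.

Lemma dotvC u v : dotv u v = dotv v u.
Proof. by rewrite !dotvE; apply: eq_bigr => i _; rewrite mulrC. Qed.

Lemma dotvDr u v w : dotv u (v + w) = dotv u v + dotv u w.
Proof. by rewrite !dotvE -big_split; apply: eq_bigr => i _; rewrite mxE mulrDr. Qed.
Lemma dotvDl u v w : dotv (v + w) u = dotv v u + dotv w u.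
Proof. by rewrite dotvC dotvDr !(dotvC u). Qed.
Lemma dotvZr u v c : dotv u (c *: v) = c * dotv u v.
Proof. rewrite !dotvE mulr_sumr; apply: eq_bigr => i _; rewrite mxE; ring. Qed.
Lemma dotvZl u v c : dotv (c *: v) u = c * dotv v u.
Proof. by rewrite dotvC dotvZr dotvC. Qed.
Lemma dotvNr u v : dotv u (- v) = - dotv u v.
Proof. by rewrite -scaleN1r dotvZr mulN1r. Qed.
Lemma dotvNl u v : dotv (- v) u = - dotv v u.
Proof. by rewrite dotvC dotvNr dotvC. Qed.
Lemma dotvBr u v w : dotv u (v - w) = dotv u v - dotv u w.
Proof. by rewrite dotvDr dotvNr. Qed.
Lemma dotvBl u v w : dotv (v - w) u = dotv v u - dotv w u.
Proof. by rewrite dotvDl dotvNl. Qed.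
Lemma dotv0r u : dotv u 0 = 0.
Proof. by rewrite dotvE big1 // => i _; rewrite mxE mulr0. Qed.
Lemma dotv0l u : dotv 0 u = 0.
Proof. by rewrite dotvC dotv0r. Qed.

Lemma dotv_sumr (I : Type) (r : seq I) (F : I -> 'rV[R]_n) u :
  dotv u (\sum_(i <- r) F i) = \sum_(i <- r) dotv u (F i).
Proof.
elim: r => [|x r IH]; first by rewrite !big_nil dotv0r.
by rewrite !big_cons dotvDr IH.
Qed.
Lemma dotv_suml (I : Type) (r : seq I) (F : I -> 'rV[R]_n) u :
  dotv (\sum_(i <- r) F i) u = \sum_(i <- r) dotv (F i) u.
Proof. by rewrite dotvC dotv_sumr; apply: eq_bigr => i _; rewrite dotvC. Qed.

Lemma dotv_ge0 u : 0 <= dotv u u.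
Proof. by rewrite dotvE sumr_ge0 // => i _; rewrite -expr2 sqr_ge0. Qed.

Lemma dotv_eq0 u : (dotv u u == 0) = (u == 0).
Proof.
apply/idP/idP; last by move/eqP->; rewrite dotv0r.
rewrite dotvE => /eqP H; apply/eqP/matrixP => i j.
rewrite (ord1 i) mxE.
have H0 : forall k, predT k -> 0 <= u 0 k * u 0 k.
  by move=> k _; rewrite -expr2 sqr_ge0.
have := psumr_eq0P H0 H isT (i:=j).
by move/eqP; rewrite mulf_eq0 orbb => /eqP ->.
Qed.

Lemma dotv_gt0 u : u != 0 -> 0 < dotv u u.
Proof. by move=> Hu; rewrite lt_def dotv_ge0 dotv_eq0 Hu. Qed.

Lemma dotv_mulmx u v M : dotv (u *m M) v = dotv u (v *m M^T).
Proof. by rewrite /dotv trmx_mul trmxK mulmxA. Qed.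

Lemma mx_ext M1 M2 : (forall v : 'rV[R]_n, v *m M1 = v *m M2) -> M1 = M2.
Proof. by move=> H; apply/row_matrixP => i; rewrite !rowE H. Qed.

Lemma refl_vec v a : v *m refl a = v - (2 * dotv v a / dotv a a) *: a.
Proof.
rewrite /refl mulmxBr mulmx1 -scalemxAr mulmxA.
rewrite [v *m a^T]mx11_scalar mul_scalar_mx scalerA.
by rewrite mulrAC.
Qed.

Lemma refl_perp v a : dotv v a = 0 -> v *m refl a = v.
Proof. by move=> H; rewrite refl_vec H mulr0 mul0r scale0r subr0. Qed.

Lemma refl_self a : a != 0 -> a *m refl a = - a.
Proof.
move=> Ha; rewrite refl_vec mulfK; last by rewrite dotv_eq0.
by rewrite scaler_nat mulr2n opprD addrA subrr add0r.
Qed.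

Lemma refl_dot a u v : a != 0 ->
  dotv (u *m refl a) (v *m refl a) = dotv u v.
Proof.
move=> Ha; have Haa : dotv a a != 0 by rewrite dotv_eq0.
rewrite !refl_vec !dotvBl !dotvBr !dotvZl !dotvZr (dotvC a v).
field => //.
Qed.

Lemma refl_invol a : a != 0 -> refl a *m refl a = 1%:M.
Proof.
move=> Ha; have Haa : dotv a a != 0 by rewrite dotv_eq0.
apply: mx_ext => v; rewrite mulmx1 mulmxA (refl_vec v) mulmxBl -scalemxAl.
rewrite refl_self // refl_vec scalerN opprK.
by rewrite subrK.
Qed.

Lemma refl_tr a : (refl a)^T = refl a.
Proof.
apply/matrixP => i j; rewrite /refl !mxE !big_ord1 !mxE eq_sym.
by rewrite (mulrC (a 0 j)).
Qed.

Lemma reflZ c a : c != 0 -> refl (c *: a) = refl a.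
Proof.
move=> Hc; case: (eqVneq a 0) => [->|Ha]; first by rewrite scaler0.
have Haa : dotv a a != 0 by rewrite dotv_eq0.
apply: mx_ext => v; rewrite !refl_vec !dotvZl !dotvZr scalerA; congr (_ - _ *: _).
by field; rewrite Hc Haa.
Qed.

Lemma reflN a : refl (- a) = refl a.
Proof. by rewrite -scaleN1r reflZ // oppr_eq0 oner_eq0. Qed.

Lemma refl_conj a M : M *m M^T = 1%:M ->
  refl (a *m M) = M^T *m refl a *m M.
Proof.
move=> HM; have HM' : M^T *m M = 1%:M by apply: mulmx1C.
apply: mx_ext => v; rewrite !mulmxA refl_vec (refl_vec (v *m M^T)).
rewrite mulmxBl -scalemxAl -mulmxA HM' mulmx1.
rewrite !dotv_mulmx trmxK -!mulmxA HM !mulmx1.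
by [].
Qed.

End Basics.


Section Words.
Variables (R : realType) (n : nat).

Definition pm (w : seq 'rV[R]_n) : 'M[R]_n := prodmx (map (@refl R n) w).

Lemma pm_nil : pm [::] = 1%:M. Proof. by []. Qed.
Lemma pm_cons a w : pm (a :: w) = refl a *m pm w. Proof. by []. Qed.
Lemma pm_cat w1 w2 : pm (w1 ++ w2) = pm w1 *m pm w2.
Proof.
elim: w1 => [|a w IH]; first by rewrite /= mul1mx.
by rewrite cat_cons !pm_cons IH mulmxA.
Qed.

Lemma pm_tr w : (pm w)^T = pm (rev w).
Proof.
elim: w => [|a w IH]; first by rewrite /pm /= trmx1.
by rewrite pm_cons trmx_mul IH refl_tr rev_cons -cats1 pm_cat pm_cons pm_nil mulmx1.
Qed.

Lemma pm_orth w : (forall a, a \in w -> a != 0) -> pm w *m (pm w)^T = 1%:M.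
Proof.
elim: w => [|a w IH] H; first by rewrite /pm /= trmx1 mulmx1.
rewrite pm_cons trmx_mul refl_tr mulmxA -(mulmxA (refl a)) IH; last first.
  by move=> b Hb; apply: H; rewrite inE Hb orbT.
by rewrite mulmx1 refl_invol // H // inE eqxx.
Qed.

Lemma pm_orth' w : (forall a, a \in w -> a != 0) -> (pm w)^T *m pm w = 1%:M.
Proof. by move=> H; apply: mulmx1C; apply: pm_orth. Qed.

Lemma dotv_orth (M : 'M[R]_n) u v : M *m M^T = 1%:M ->
  dotv (u *m M) (v *m M) = dotv u v.
Proof. by move=> HM; rewrite dotv_mulmx -mulmxA HM mulmx1. Qed.

Definition cone (S : seq 'rV[R]_n) (v : 'rV[R]_n) : Prop :=
  exists c : 'rV[R]_n -> R, (forall x, 0 <= c x) /\ v = \sum_(x <- S) c x *: x.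

Lemma cone0 S : cone S 0.
Proof. by exists (fun _ => 0); split => // ; rewrite big1 // => x _; rewrite scale0r. Qed.

Lemma coneD S u v : cone S u -> cone S v -> cone S (u + v).
Proof.
move=> [c [c0 ->]] [d [d0 ->]]; exists (fun x => c x + d x); split.
  by move=> x; rewrite addr_ge0.
by rewrite -big_split; apply: eq_bigr => x _; rewrite scalerDl.
Qed.

Lemma coneZ S k u : 0 <= k -> cone S u -> cone S (k *: u).
Proof.
move=> k0 [c [c0 ->]]; exists (fun x => k * c x); split.
  by move=> x; rewrite mulr_ge0.
by rewrite scaler_sumr; apply: eq_bigr => x _; rewrite scalerA.
Qed.

Lemma cone_sum S (I : Type) (r : seq I) (F : I -> 'rV[R]_n) :
  (forall i, cone S (F i)) -> cone S (\sum_(i <- r) F i).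
Proof.
move=> H; elim: r => [|x r IH]; first by rewrite big_nil; apply: cone0.
by rewrite big_cons; apply: coneD.
Qed.

Lemma cone_sum_in S (r : seq 'rV[R]_n) (F : 'rV[R]_n -> 'rV[R]_n) :
  (forall i, i \in r -> cone S (F i)) -> cone S (\sum_(i <- r) F i).
Proof.
elim: r => [|x r IH] H; first by rewrite big_nil; apply: cone0.
rewrite big_cons; apply: coneD; first by apply: H; rewrite inE eqxx.
by apply: IH => i Hi; apply: H; rewrite inE Hi orbT.
Qed.

Lemma cone_trans S S' v : (forall x, x \in S -> cone S' x) -> cone S v -> cone S' v.
Proof.
move=> H [c [c0 ->]]; apply: cone_sum_in => x Hx; apply: coneZ => //.
exact: H.
Qed.

Lemma cone_mem S x : uniq S -> x \in S -> cone S x.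
Proof.
move=> uS xS; exists (fun z => (z == x)%:R); split; first by move=> z; rewrite ler0n.
rewrite (bigD1_seq x) //= eqxx scale1r big1 ?addr0 // => z /negbTE ->.
by rewrite scale0r.
Qed.

Lemma cone_dot S v u : cone S v -> (forall x, x \in S -> 0 <= dotv x u) ->
  0 <= dotv v u.
Proof.
move=> [c [c0 ->]] H; rewrite dotv_suml big_seq sumr_ge0 // => x Hx.
by rewrite dotvZl mulr_ge0 // H.
Qed.

Lemma cone_dot_gt S v u : cone S v -> v != 0 ->
  (forall x, x \in S -> 0 < dotv x u) -> 0 < dotv v u.
Proof.
move=> [c [c0 Hv]] v0 H; rewrite lt_def; apply/andP; split; last first.
  by apply: (cone_dot (ex_intro _ c (conj c0 Hv))) => x /H /ltW.
apply: contra v0; rewrite Hv dotv_suml big_seq psumr_eq0; last first.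
  by move=> x Hx; rewrite dotvZl mulr_ge0 // ltW // H.
move=> /allP A; rewrite big_seq big1 // => x Hx.
have := A x Hx; rewrite Hx /= dotvZl mulf_eq0 => /orP [/eqP->|]; first by rewrite scale0r.
by rewrite (gt_eqF (H x Hx)).
Qed.

End Words.


Lemma count_strict (T : eqType) (s : seq T) (a b : pred T) x :
  x \in s -> subpred a b -> b x -> ~~ a x -> (count a s < count b s)%N.
Proof.
move=> xs ab bx ax; elim: s xs => //= y s IH; rewrite inE => /orP [/eqP <-|ys].
  rewrite bx (negbTE ax) /= add0n ltnS; exact: sub_count.
have := IH ys; case: (boolP (a y)) => ay; first by rewrite (ab _ ay) /=; lia.
by case: (b y) => /=; lia.
Qed.

Lemma count_filterC (T : Type) (s : seq T) (a p : pred T) :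
  count p s = (count p [seq x <- s | a x] + count p [seq x <- s | ~~ a x])%N.
Proof.
elim: s => //= y s IH; case: (a y) => /=; rewrite IH; lia.
Qed.

Section Generic.
Variables (R : realType) (n : nat) (L : seq 'rV[R]_n) (q : 'rV[R]_n).
Hypothesis L0 : forall a, a \in L -> a != 0.
Hypothesis Lr : forall a b, a \in L -> b \in L -> b *m refl a \in L.
Hypothesis Lq : forall a, a \in L -> dotv a q != 0.

Definition posr := [seq a <- undup L | 0 < dotv a q].

Lemma memP b : (b \in posr) = (b \in L) && (0 < dotv b q).
Proof. by rewrite mem_filter mem_undup andbC. Qed.

Lemma uniq_posr : uniq posr.
Proof. by rewrite filter_uniq // undup_uniq. Qed.

Lemma LN a : a \in L -> - a \in L.
Proof. by move=> Ha; rewrite -refl_self ?L0 //; apply: Lr. Qed.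

Lemma posr_L b : b \in posr -> b \in L.
Proof. by rewrite memP => /andP []. Qed.

Lemma posr_q b : b \in posr -> 0 < dotv b q.
Proof. by rewrite memP => /andP []. Qed.

Lemma posr_neq0 b : b \in posr -> b != 0.
Proof. by move/posr_L/L0. Qed.

Lemma posrN b : b \in posr -> (- b \in posr) = false.
Proof.
move=> Hb; rewrite memP dotvNl oppr_gt0 andbC.
by rewrite lt_gtF // posr_q.
Qed.

Lemma dich b : b \in L -> (b \in posr) || (- b \in posr).
Proof.
move=> Hb; rewrite !memP Hb LN //= dotvNl oppr_gt0.
by case: (ltgtP (dotv b q) 0) (Lq Hb) => // ->; rewrite eqxx.
Qed.

Lemma L_pm w b : {subset w <= L} -> b \in L -> b *m pm w \in L.
Proof.
elim: w b => [|a w IH] b Hw Hb; first by rewrite pm_nil mulmx1.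
rewrite pm_cons mulmxA; apply: IH.
  by move=> x Hx; apply: Hw; rewrite inE Hx orbT.
by apply: Lr => //; apply: Hw; rewrite inE eqxx.
Qed.

Definition okD (S : seq 'rV[R]_n) :=
  [/\ uniq S, {subset S <= posr} & forall b, b \in posr -> cone S b].
Definition minD (S : seq 'rV[R]_n) := forall y, y \in S -> ~ cone (rem y S) y.

Lemma exD : exists D, okD D /\ minD D.
Proof.
suff H : forall N S, (size S <= N)%N -> okD S -> exists D, okD D /\ minD D.
  apply: (H _ posr (leqnn _)); split; first exact: uniq_posr.
    by [].
  by move=> b Hb; apply: cone_mem => //; apply: uniq_posr.
elim=> [|N IH] S HS [uS sS cS].
  exists S; split => // y; move: HS; rewrite leqn0 => /nilP -> //.
case: (classic (minD S)) => Hm; first by exists S.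
have [y [yS Hy]] : exists y, y \in S /\ cone (rem y S) y.
  apply: NNPP => H; apply: Hm => y yS Hc; apply: H; by exists y.
apply: (IH (rem y S)).
  by rewrite size_rem //; move: HS; case: (size S).
split; first exact: rem_uniq.
  by move=> x; rewrite (mem_rem_uniq _ uS) => /andP [_ /sS].
move=> b /cS; apply: cone_trans => x xS.
case: (eqVneq x y) => [->//|xy]; apply: cone_mem; first exact: rem_uniq.
by rewrite (mem_rem_uniq _ uS) inE xy.
Qed.


Definition prop (b a : 'rV[R]_n) := b == (dotv b a / dotv a a) *: a.

Lemma propP a b : a != 0 -> reflect (exists c, b = c *: a) (prop b a).
Proof.
move=> a0; have aa : dotv a a != 0 by rewrite dotv_eq0.
apply: (iffP eqP) => [->|[c ->]]; first by eexists.
by rewrite dotvZl mulfK.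
Qed.

Lemma prop_refl a b : a != 0 -> prop (b *m refl a) a = prop b a.
Proof.
move=> a0; apply/(propP _ a0)/(propP _ a0) => [[c Hc]|[c ->]].
  exists (- c); rewrite -[b](mulmx1) -(refl_invol a0) mulmxA Hc -scalemxAl refl_self //.
  by rewrite scalerN scaleNr.
by exists (- c); rewrite -scalemxAl refl_self // scalerN scaleNr.
Qed.

Lemma refl_prop a b : a != 0 -> b != 0 -> prop b a -> refl b = refl a.
Proof.
move=> a0 b0 /(propP _ a0) [c Hc]; rewrite Hc reflZ //.
by apply: contra b0 => /eqP c0; rewrite Hc c0 scale0r.
Qed.

Section WithD.
Variable D : seq 'rV[R]_n.
Hypothesis HD : okD D.
Hypothesis HDm : minD D.

Lemma uD : uniq D. Proof. by case: HD. Qed.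
Lemma D_posr : {subset D <= posr}. Proof. by case: HD. Qed.
Lemma D_cone b : b \in posr -> cone D b. Proof. by case: HD => _ _; apply. Qed.
Lemma D_neq0 a : a \in D -> a != 0. Proof. by move/D_posr/posr_neq0. Qed.
Lemma D_L a : a \in D -> a \in L. Proof. by move/D_posr/posr_L. Qed.

Lemma lemU y x k : y \in D -> x \in D -> x != y -> 0 < k ->
  cone D (y - k *: x) -> False.
Proof.
move=> yD xD xy k0 [c [c0 H]].
rewrite (bigD1_seq y) //= in H; last exact: uD.
set S := \sum_(z <- D | z != y) c z *: z in H.
case: (ltP (c y) 1) => cy.
  apply: (HDm yD).
  have E : y = (1 - c y)^-1 *: (k *: x + S).
    apply/rowP => i; have Hi : (y - k *: x) 0 i = (c y *: y + S) 0 i by rewrite H.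
    rewrite !mxE in Hi.
    have HS : S 0 i = y 0 i - k * x 0 i - c y * y 0 i by rewrite Hi; ring.
    rewrite !mxE HS; field; lra.
  rewrite [X in cone _ X]E.
  apply: coneZ; first by rewrite invr_ge0; lra.
  apply: coneD; first apply: coneZ; first by lra.
    apply: cone_mem; first by apply: rem_uniq; apply: uD.
    by rewrite (mem_rem_uniq _ uD) inE xy xD.
  exists c; split => //; rewrite /S (rem_filter _ uD) big_filter.
  by apply: eq_bigr.
have Hq : dotv (y - k *: x) q = dotv (c y *: y + S) q by rewrite H.
 rewrite /= dotvBl dotvZl dotvDl dotvZl in Hq.
have HSq : 0 <= dotv S q.
  rewrite /S -big_filter dotv_suml big_seq sumr_ge0 // => z.
  rewrite mem_filter => /andP [_ zD]; rewrite dotvZl mulr_ge0 //.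
  by apply: ltW; apply: posr_q; apply: D_posr.
have yq := posr_q (D_posr yD); have xq := posr_q (D_posr xD).
have h1 : 0 < k * dotv x q by rewrite mulr_gt0.
have h2 : 0 <= (c y - 1) * dotv y q by rewrite mulr_ge0 // ?subr_ge0 // ltW.
move: Hq h1 h2; set A := k * dotv x q; set B := c y * dotv y q => Hq h1 h2.
have : (c y - 1) * dotv y q = B - dotv y q by rewrite /B; ring.
lra.
Qed.

Lemma lemP2 a b : a \in D -> b \in D -> a != b -> dotv a b <= 0.
Proof.
move=> aD bD ab; rewrite leNgt; apply/negP => Hab.
have a0 := D_neq0 aD; have aa := dotv_gt0 a0.
have tL : b *m refl a \in L by apply: Lr; apply: D_L.
set k := 2 * dotv b a / dotv a a.
have k0 : 0 < k by rewrite /k dotvC divr_gt0 // mulr_gt0.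
have Et : b *m refl a = b - k *: a by rewrite refl_vec.
case/orP: (dich tL) => Ht.
  by apply: (lemU bD aD ab k0); rewrite -Et; apply: D_cone.
apply: (lemU aD bD _ (k := k^-1)); first by rewrite eq_sym.
  by rewrite invr_gt0.
have -> : a - k^-1 *: b = k^-1 *: (- (b *m refl a)).
  rewrite Et; apply/rowP => i; rewrite !mxE; field; lra.
by apply: coneZ; [rewrite invr_ge0 ltW | apply: D_cone].
Qed.


Lemma lemA a b : a \in D -> b \in posr -> ~~ prop b a -> b *m refl a \in posr.
Proof.
move=> aD bP nab; case: (boolP (b *m refl a \in posr)) => // Hn; exfalso.
have a0 := D_neq0 aD; have aa := dotv_gt0 a0.
have tL : b *m refl a \in L by apply: Lr; [apply: D_L | apply: posr_L].
have Ht : - (b *m refl a) \in posr by move: (dich tL); rewrite (negbTE Hn).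
have [c [c0 Hb]] := D_cone bP; have [d [d0 Hd]] := D_cone Ht.
set k := 2 * dotv b a / dotv a a.
have E : \sum_(z <- D) (c z + d z) *: z = k *: a.
  rewrite (eq_bigr (fun z => c z *: z + d z *: z)); last by move=> z _; rewrite scalerDl.
  rewrite big_split /= -Hb -Hd refl_vec -/k opprB.
  by rewrite addrC subrK.
rewrite (bigD1_seq a) //= in E; last exact: uD.
set T := \sum_(z <- D | z != a) (c z + d z) *: z in E.
have ET : T = (k - (c a + d a)) *: a.
  by rewrite scalerBl -E addrAC subrr add0r.
have Ta : dotv T a <= 0.
  rewrite /T -big_filter dotv_suml big_seq sumr_le0 // => z.
  rewrite mem_filter => /andP [za zD]; rewrite dotvZl mulr_ge0_le0 //.
    by rewrite addr_ge0.
  by apply: lemP2.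
have Hk : k - (c a + d a) <= 0.
  move: Ta; rewrite ET dotvZl => Ta.
  by rewrite -(pmulr_rle0 _ aa) mulrC.
have aq := posr_q (D_posr aD).
have Tq0 : dotv T q = 0.
  apply/eqP; rewrite eq_le; apply/andP; split.
    by rewrite ET dotvZl mulr_le0_ge0 // ltW.
  rewrite /T -big_filter dotv_suml big_seq sumr_ge0 // => z.
  rewrite mem_filter => /andP [za zD]; rewrite dotvZl mulr_ge0 ?addr_ge0 //.
  by apply: ltW; apply: posr_q; apply: D_posr.
move: Tq0; rewrite /T -big_filter dotv_suml big_seq => /eqP.
rewrite psumr_eq0; last first.
  move=> z; rewrite mem_filter => /andP [za zD]; rewrite dotvZl.
  by rewrite mulr_ge0 ?addr_ge0 // ltW // posr_q // D_posr.
move=> /allP Hall; apply: (negP nab); apply/propP => //; exists (c a).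
rewrite Hb (bigD1_seq a) //=; last exact: uD.
rewrite big_seq_cond big1 ?addr0 // => z /andP [zD za].
have zf : z \in [seq x <- D | x != a] by rewrite mem_filter za zD.
have := Hall z zf; rewrite zf /= dotvZl mulf_eq0 (gt_eqF (posr_q (D_posr zD))) orbF.
rewrite paddr_eq0 // => /andP [/eqP -> _]; by rewrite scale0r.
Qed.


Definition Pn a := [seq b <- posr | ~~ prop b a].
Definition Pp a := [seq b <- posr | prop b a].

Lemma Pp_pos a b : a \in D -> b \in Pp a -> exists2 c, 0 < c & b = c *: a.
Proof.
move=> aD; rewrite mem_filter => /andP [/(propP _ (D_neq0 aD)) [c Hc] bP].
exists c => //; have := posr_q bP; rewrite Hc dotvZl => H.
by rewrite -(pmulr_lgt0 _ (posr_q (D_posr aD))).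
Qed.

Lemma Pp_refl a b : a \in D -> b \in Pp a -> b *m refl a = - b.
Proof.
move=> aD /(Pp_pos aD) [c _ ->]; rewrite -scalemxAl refl_self ?D_neq0 //.
by rewrite scalerN.
Qed.

Lemma a_Pp a : a \in D -> a \in Pp a.
Proof.
move=> aD; rewrite mem_filter D_posr // andbT; apply/propP; first exact: D_neq0.
by exists 1; rewrite scale1r.
Qed.

Lemma perm_Pn a : a \in D ->
  perm_eq (map (fun b => b *m refl a) (Pn a)) (Pn a).
Proof.
move=> aD; have a0 := D_neq0 aD.
have inv : forall b : 'rV[R]_n, b *m refl a *m refl a = b.
  by move=> b; rewrite -mulmxA refl_invol // mulmx1.
apply: uniq_perm.
- rewrite map_inj_in_uniq ?filter_uniq ?uniq_posr ?undup_uniq //.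
  by move=> x y _ _ Hxy; rewrite -(inv x) Hxy inv.
- by rewrite filter_uniq ?uniq_posr ?undup_uniq.
move=> x; apply/mapP/idP => [[b bP ->]|xP].
  move: bP; rewrite /Pn mem_filter => /andP [nb bP].
  by rewrite mem_filter prop_refl // nb /=; apply: lemA.
exists (x *m refl a); last by rewrite inv.
move: xP; rewrite /Pn mem_filter => /andP [nb bP].
by rewrite mem_filter prop_refl // nb /=; apply: lemA.
Qed.

Lemma trans_step x : exists w, {subset w <= D} /\
  forall b, b \in posr -> 0 <= dotv (x *m pm w) b.
Proof.
suff H : forall m (x : 'rV[R]_n), (count (fun b => (dotv x b < 0)%R) posr <= m)%N ->
  exists w, {subset w <= D} /\ forall b, b \in posr -> 0 <= dotv (x *m pm w) b.
  exact: (H _ x (leqnn _)).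
elim=> [|m IH] {}x Hm.
  exists [::]; split => // b bP; rewrite pm_nil mulmx1 leNgt; apply/negP => Hb.
  move: Hm; rewrite leqNgt -has_count => /negP; apply; apply/hasP; by exists b.
case: (boolP (has (fun b => dotv x b < 0) posr)) => Hh; last first.
  exists [::]; split => // b bP; rewrite pm_nil mulmx1 leNgt; apply/negP => Hb.
  by apply: (negP Hh); apply/hasP; exists b.
have [g gD gx] : exists2 g, g \in D & dotv x g < 0.
  apply: NNPP => H; move/hasP: Hh => [b bP xb].
  have : 0 <= dotv b x.
    apply: (cone_dot (D_cone bP)) => g gD; rewrite leNgt; apply/negP => Hg.
    by apply: H; exists g => //; rewrite dotvC.
  by rewrite dotvC leNgt xb.
have g0 := D_neq0 gD.
have Hlt : (count (fun b => (dotv (x *m refl g) b < 0)%R) posr <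
            count (fun b => (dotv x b < 0)%R) posr)%N.
  rewrite (count_filterC _ (fun b => prop b g)) [X in (_ < X)%N](count_filterC _ (fun b => prop b g)).
  have -> : count (fun b => dotv (x *m refl g) b < 0) [seq b <- posr | prop b g] = 0%N.
    apply/eqP; rewrite -leqn0 leqNgt -has_count; apply/hasP => [[b bP]].
    rewrite dotv_mulmx refl_tr Pp_refl // dotvNr oppr_lt0.
    have [c c0 ->] := Pp_pos gD bP; rewrite dotvZr.
    by rewrite pmulr_rgt0 // => /(lt_trans gx); rewrite ltxx.
  have -> : count (fun b => dotv (x *m refl g) b < 0) [seq b <- posr | ~~ prop b g] =
            count (fun b => dotv x b < 0) [seq b <- posr | ~~ prop b g].
    rewrite -[RHS](seq.permP (perm_Pn gD)) count_map.
    by apply: eq_count => b /=; rewrite dotv_mulmx refl_tr.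
  have Hp : (0 < count (fun b => (dotv x b < 0)%R) [seq b <- posr | prop b g])%N.
    by rewrite -has_count; apply/hasP; exists g => //; apply: a_Pp.
  by rewrite add0n -[X in (X < _)%N]addn0 [X in (_ < X)%N]addnC ltn_add2l.
have Hc : (count (fun b => (dotv (x *m refl g) b < 0)%R) posr <= m)%N.
  by rewrite -ltnS (leq_trans Hlt Hm).
have [w [wD Hw]] := IH (x *m refl g) Hc.
exists (g :: w); split.
  by move=> z; rewrite inE => /orP [/eqP ->|/wD].
by move=> b bP; rewrite pm_cons mulmxA; apply: Hw.
Qed.

Definition rho := \sum_(b <- posr) b.

Lemma rho_D a : a \in D -> 0 < dotv a rho.
Proof.
move=> aD; have a0 := D_neq0 aD; have aa := dotv_gt0 a0.
have aq := posr_q (D_posr aD).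
have Hs : forall F : 'rV[R]_n -> 'rV[R]_n, \sum_(b <- posr) F b =
    \sum_(b <- Pn a) F b + \sum_(b <- Pp a) F b.
  by move=> F; rewrite /Pn /Pp !(@big_filter _ _ _ _ posr) (bigID (fun b => prop b a)) /= addrC.
have E1 : rho *m refl a = \sum_(b <- Pn a) b - \sum_(b <- Pp a) b.
  rewrite /rho mulmx_suml Hs; congr (_ + _).
    by rewrite -[RHS](perm_big _ (perm_Pn aD)) big_map.
  rewrite -sumrN big_seq [RHS]big_seq; apply: eq_bigr => b bP.
  by rewrite Pp_refl.
have E2 : rho = \sum_(b <- Pn a) b + \sum_(b <- Pp a) b by rewrite /rho Hs.
set k := 2 * dotv rho a / dotv a a.
have E4 : rho *m refl a = rho - k *: a by rewrite refl_vec.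
have E3 : k *: a = 2%:R *: \sum_(b <- Pp a) b.
  move: E1 E2 E4; set S1 := \sum_(b <- Pn a) b; set S2 := \sum_(b <- Pp a) b.
  move=> E1 E2 E4; apply/rowP => i.
  have h1 : (rho *m refl a) 0 i = (rho - k *: a) 0 i by rewrite E4.
  have h2 : rho 0 i = (S1 + S2) 0 i by rewrite {1}E2.
  rewrite E1 !mxE in h1; rewrite !mxE in h2; rewrite !mxE.
  have -> : k * a 0 i = rho 0 i - (S1 0 i - S2 0 i) by rewrite h1; ring.
  by rewrite h2; ring.
have Hpos : 0 < dotv (\sum_(b <- Pp a) b) q.
  rewrite dotv_suml (bigD1_seq a) /=; last by rewrite filter_uniq ?uniq_posr ?undup_uniq.
    rewrite ltr_wpDr // ?aq // big_seq_cond sumr_ge0 // => b /andP [bP _].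
    by apply: ltW; apply: posr_q; move: bP; rewrite mem_filter => /andP [].
  exact: a_Pp.
have : 0 < k.
  have := congr1 (fun v => dotv v q) E3; rewrite /= dotvZl dotvZl => Hk.
  by rewrite -(pmulr_lgt0 _ aq) Hk mulr_gt0.
by rewrite /k dotvC pmulr_lgt0 ?invr_gt0 // pmulr_rgt0.
Qed.

Lemma rho_pos b : b \in posr -> 0 < dotv b rho.
Proof.
move=> bP; apply: (cone_dot_gt (D_cone bP)); first exact: posr_neq0.
exact: rho_D.
Qed.


Definition cnt c := count (fun y => (dotv y q < dotv c q)%R) posr.

Lemma gen_step c :
  (forall c', c' \in posr -> (cnt c' < cnt c)%N ->
     exists w, {subset w <= D} /\ refl c' = pm w) ->
  c \in posr -> exists w, {subset w <= D} /\ refl c = pm w.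
Proof.
move=> IH cP; have c0 := posr_neq0 cP; have cc := dotv_gt0 c0.
have [g gD gc] : exists2 g, g \in D & 0 < dotv c g.
  apply: NNPP => H.
  have : 0 <= dotv c (- c).
    apply: (cone_dot (D_cone cP)) => g gD; rewrite dotvNr oppr_ge0 dotvC.
    by rewrite leNgt; apply/negP => Hg; apply: H; exists g.
  by rewrite dotvNr oppr_ge0 leNgt cc.
have g0 := D_neq0 gD; have gg := dotv_gt0 g0.
case: (boolP (prop c g)) => Hp.
  exists [:: g]; split; first by move=> z; rewrite inE => /eqP ->.
  by rewrite (refl_prop g0 c0 Hp) /pm /prodmx /= mulmx1.
set c' := c *m refl g.
have c'P : c' \in posr by apply: lemA => //; apply: D_posr.
have Hq : dotv c' q < dotv c q.
  rewrite /c' refl_vec dotvBl dotvZl gtrDl oppr_lt0 mulr_gt0 //.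
    by rewrite divr_gt0 // mulr_gt0.
  by apply: posr_q; apply: D_posr.
have [w [wD Hw]] : exists w, {subset w <= D} /\ refl c' = pm w.
  apply: IH => //; apply: (count_strict c'P).
  - by move=> y /= Hy; apply: lt_trans Hy Hq.
  - by [].
  - by rewrite /= ltxx.
exists (g :: w ++ [:: g]); split.
  move=> z; rewrite inE mem_cat inE => /orP [/eqP ->|/orP [/wD|/eqP ->]] //.
have -> : c = c' *m refl g by rewrite /c' -mulmxA refl_invol // mulmx1.
rewrite refl_conj; last by rewrite refl_tr refl_invol.
by rewrite refl_tr Hw pm_cons pm_cat pm_cons pm_nil mulmx1 mulmxA.
Qed.

Lemma gen_pos c : c \in posr -> exists w, {subset w <= D} /\ refl c = pm w.
Proof.
suff H : forall m c, (cnt c <= m)%N -> c \in posr ->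
    exists w, {subset w <= D} /\ refl c = pm w.
  by move=> cP; apply: (H _ c (leqnn _)).
elim=> [|m IHm] {}c Hc; apply: gen_step => c' c'P Hlt.
  by move: Hc Hlt; rewrite leqn0 => /eqP ->.
by apply: IHm => //; rewrite -ltnS (leq_trans Hlt Hc).
Qed.

Lemma gen_L b : b \in L -> exists w, {subset w <= D} /\ refl b = pm w.
Proof.
move=> bL; case/orP: (dich bL) => H; first exact: gen_pos.
by rewrite -reflN; apply: gen_pos.
Qed.

Lemma gen_word w : {subset w <= L} -> exists w', {subset w' <= D} /\ pm w = pm w'.
Proof.
elim: w => [|a w IH] H; first by exists [::].
have [wa [waD Ha]] := gen_L (H a (mem_head _ _)).
have [w' [w'D Hw]] : exists w', {subset w' <= D} /\ pm w = pm w'.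
  by apply: IH => z zw; apply: H; rewrite inE zw orbT.
exists (wa ++ w'); split.
  by move=> z; rewrite mem_cat => /orP [/waD|/w'D].
by rewrite pm_cons pm_cat Ha Hw.
Qed.

Lemma ivt w v : v \notin posr -> v *m pm w \in posr ->
  exists w1 a w2, [/\ w = w1 ++ a :: w2, v *m pm w1 \notin posr &
                      v *m pm w1 *m refl a \in posr].
Proof.
elim: w v => [|a w IH] v vn vw; first by move: vw; rewrite pm_nil mulmx1 (negbTE vn).
case: (boolP (v *m refl a \in posr)) => Ha.
  by exists [::], a, w; rewrite pm_nil mulmx1.
have [w1 [b [w2 [E H1 H2]]]] : exists w1 b w2, [/\ w = w1 ++ b :: w2,
    v *m refl a *m pm w1 \notin posr & v *m refl a *m pm w1 *m refl b \in posr].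
  by apply: IH => //; rewrite -mulmxA -pm_cons.
by exists (a :: w1), b, w2; rewrite E pm_cons !mulmxA.
Qed.

Lemma del a t : {subset (a :: t) <= D} -> a *m pm (a :: t) \in posr ->
  exists w', [/\ {subset w' <= D}, (size w' < size (a :: t))%N & pm w' = pm (a :: t)].
Proof.
move=> Ht Hp; have aD : a \in D by apply: Ht; rewrite mem_head.
have a0 := D_neq0 aD.
move: Hp; rewrite pm_cons mulmxA refl_self // => Hp.
have an : - a \notin posr by rewrite posrN // D_posr.
have [w1 [a' [w2 [E H1 H2]]]] := ivt an Hp.
have w1D : {subset w1 <= D}.
  by move=> z zw; apply: Ht; rewrite E inE mem_cat zw orbT.
have a'D : a' \in D.
  by apply: Ht; rewrite E inE mem_cat inE eqxx !orbT.
have w2D : {subset w2 <= D}.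
  by move=> z zw; apply: Ht; rewrite E inE mem_cat inE zw !orbT.
set u := pm w1 in H1 H2.
have w1n : forall z, z \in w1 -> z != 0 by move=> z /w1D /D_neq0.
have uo : u *m u^T = 1%:M by apply: pm_orth.
have bL : - a *m u \in L by apply: L_pm; [move=> z /w1D /D_L | apply: LN; apply: D_L].
have nbP : - (- a *m u) \in posr by move: (dich bL); rewrite (negbTE H1).
have Hprop : prop (- (- a *m u)) a'.
  apply: contraT => Hn; have := lemA a'D nbP Hn.
  by rewrite mulNmx posrN.
have Er : refl a' = u^T *m refl a *m u.
  rewrite -(refl_prop (D_neq0 a'D) (posr_neq0 nbP) Hprop).
  by rewrite reflN mulNmx reflN refl_conj.
exists (w1 ++ w2); split.
- by move=> z; rewrite mem_cat => /orP [/w1D|/w2D].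
- by rewrite E /= !size_cat /=; lia.
rewrite E !pm_cat pm_cons -/u Er !mulmxA -(mulmxA (refl a)) uo mulmx1 refl_invol //.
by rewrite mul1mx.
Qed.

Lemma free_D w : {subset w <= D} -> (forall b, b \in posr -> b *m pm w \in posr) ->
  pm w = 1%:M.
Proof.
suff H : forall m w, (size w <= m)%N -> {subset w <= D} ->
   (forall b, b \in posr -> b *m pm w \in posr) -> pm w = 1%:M.
  by move=> wD Hw; apply: (H _ w (leqnn _)).
elim=> [|m IH] [|a t] //= Hs wD Hw.
have aP : a \in posr by apply: D_posr; apply: wD; rewrite mem_head.
have [w' [w'D Hsz Ep]] := del wD (Hw a aP).
rewrite -Ep; apply: IH => //.
  by move: Hsz Hs => /=; lia.
by move=> b bP; rewrite Ep; apply: Hw.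
Qed.

Lemma free_L w : {subset w <= L} -> (forall b, b \in posr -> b *m pm w \in posr) ->
  pm w = 1%:M.
Proof.
move=> wL Hw; have [w' [w'D E]] := gen_word wL.
by rewrite E; apply: free_D => // b bP; rewrite -E; apply: Hw.
Qed.

End WithD.

Lemma trans_gen x : exists w, {subset w <= L} /\
  forall b, b \in posr -> 0 <= dotv (x *m pm w) b.
Proof.
have [D [HD HDm]] := exD.
have [w [wD Hw]] := trans_step HD HDm x.
by exists w; split => // z /wD /(D_posr HD) /posr_L.
Qed.

Lemma rho_gen b : b \in posr -> 0 < dotv b rho.
Proof. move=> bP; have [D [HD HDm]] := exD; exact: (rho_pos HD HDm bP). Qed.

Lemma free_gen w : {subset w <= L} -> (forall b, b \in posr -> b *m pm w \in posr) ->
  pm w = 1%:M.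
Proof. move=> wL Hw; have [D [HD HDm]] := exD; exact: (free_L HD HDm wL Hw). Qed.


End Generic.


Section Aux.
Variables (R : realType) (n : nat).
Implicit Types (u v a b : 'rV[R]_n) (M : 'M[R]_n).

Lemma genmxP (S : seq 'rV[R]_n) g :
  genmx [seq refl a | a <- S] g <-> exists w, {subset w <= S} /\ g = pm w.
Proof.
split.
  move=> [s [Hs ->]]; elim: s Hs => [|x s IH] /=; first by exists [::].
  move=> /andP [/mapP [a aS ->] /IH [w [wS Hw]]].
  exists (a :: w); split; last by rewrite pm_cons -Hw.
  by move=> z; rewrite inE => /orP [/eqP ->|/wS].
move=> [w [wS ->]]; exists (map (@refl R n) w); split => //.
by apply/allP => x /mapP [a aw ->]; apply: map_f; apply: wS.
Qed.

Lemma exists_t (s : seq (R * R)) : (forall p, p \in s -> p.1 != 0 \/ p.2 != 0) ->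
  exists t, forall p, p \in s -> p.1 + t * p.2 != 0.
Proof.
move=> H; exists (1 + \sum_(p <- s) `|p.1 / p.2|) => p ps.
set t := 1 + _.
have Hle : `|p.1 / p.2| <= \sum_(p <- s) `|p.1 / p.2|.
  by rewrite (big_rem _ ps) /= lerDl sumr_ge0.
have t0 : 0 < t by rewrite /t ltr_wpDr // sumr_ge0.
case: (eqVneq p.2 0) => [p20|p20].
  by rewrite p20 mulr0 addr0; case: (H p ps) => //; rewrite p20 eqxx.
apply/negP => /eqP E.
have Ep : t * p.2 = - p.1 by apply/eqP; rewrite -subr_eq0 opprK addrC E.
have Et : t = - (p.1 / p.2) by rewrite -[t](mulfK p20) Ep mulNr.
have : t <= \sum_(p <- s) `|p.1 / p.2| by rewrite -[t]gtr0_norm // Et normrN.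
rewrite /t; lra.
Qed.

Lemma exists_reg (L : seq 'rV[R]_n) (Pr : 'rV[R]_n -> Prop) :
  (forall u v, Pr u -> Pr v -> Pr (u + v)) -> (forall c u, Pr u -> Pr (c *: u)) ->
  Pr 0 -> (forall a, a \in L -> Pr a /\ dotv a a != 0) ->
  exists v, Pr v /\ forall a, a \in L -> dotv a v != 0.
Proof.
move=> HD HZ H0; elim: L => [|a L IH] HL; first by exists 0.
have [v [Pv Hv]] : exists v, Pr v /\ forall b, b \in L -> dotv b v != 0.
  by apply: IH => b bL; apply: HL; rewrite inE bL orbT.
have [Pa aa] := HL a (mem_head _ _).
have [t Ht] : exists t, forall p, p \in (dotv a v, dotv a a) :: [seq (dotv b v, dotv b a) | b <- L] ->
    p.1 + t * p.2 != 0.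
  apply: exists_t => p; rewrite inE => /orP [/eqP -> /=|/mapP [b bL ->] /=]; first by right.
  by left; apply: Hv.
exists (v + t *: a); split; first by apply: HD => //; apply: HZ.
move=> b; rewrite inE => /orP [/eqP ->|bL].
  by rewrite dotvDr dotvZr; apply: (Ht (dotv a v, dotv a a)); rewrite mem_head.
rewrite dotvDr dotvZr; apply: (Ht (dotv b v, dotv b a)).
by rewrite inE; apply/orP; right; apply: map_f.
Qed.

Lemma negeq0 (w : 'rV[R]_n) : - w = w -> w = 0.
Proof.
move=> E; apply/rowP => i.
have : (- w) 0 i = w 0 i by rewrite E.
by rewrite !mxE => h; lra.
Qed.

End Aux.

Section Sigma.
Variables (R : realType) (n : nat) (rs : seq 'rV[R]_n) (sg : 'M[R]_n).
Hypothesis hR : root_system rs.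
Hypothesis hs : reflgroup rs sg.
Hypothesis hss : sg *m sg = 1%:M.
Implicit Types (u v a b : 'rV[R]_n) (M : 'M[R]_n).

Lemma rs0 a : a \in rs -> a != 0. Proof. by case: hR => H _; apply: H. Qed.
Lemma rsr a b : a \in rs -> b \in rs -> b *m refl a \in rs.
Proof. by case: hR => _ H; apply: H. Qed.

Lemma sg_orth : sg *m sg^T = 1%:M.
Proof.
have [w [wS ->]] := (genmxP rs sg).1 hs.
by apply: pm_orth => z /wS /rs0.
Qed.

Lemma sg_sym : sg^T = sg.
Proof.
have H : sg^T *m sg = 1%:M by apply: mulmx1C; apply: sg_orth.
by rewrite -[sg^T]mulmx1 -hss mulmxA H mul1mx.
Qed.

Lemma dotv_sg u v : dotv (u *m sg) v = dotv u (v *m sg).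
Proof. by rewrite dotv_mulmx sg_sym. Qed.

Lemma refl_comm a : a *m sg = - a \/ a *m sg = a -> refl a *m sg = sg *m refl a.
Proof.
move=> Ha; apply: mx_ext => v; rewrite !mulmxA !refl_vec mulmxBl -scalemxAl.
rewrite dotv_sg; case: Ha => ->.
  by rewrite dotvNr mulrN mulNr scalerN scaleNr.
by [].
Qed.

Lemma pm_comm w : (forall c, c \in w -> c *m sg = - c \/ c *m sg = c) ->
  pm w *m sg = sg *m pm w.
Proof.
elim: w => [|a w IH] H; first by rewrite pm_nil mul1mx mulmx1.
rewrite pm_cons -mulmxA IH; last by move=> c cw; apply: H; rewrite inE cw orbT.
by rewrite !mulmxA refl_comm //; apply: H; rewrite mem_head.
Qed.

Lemma V12_perp u v : u *m sg = - u -> v *m sg = v -> dotv u v = 0.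
Proof.
move=> Hu Hv; have : dotv (u *m sg) v = dotv u (v *m sg) by rewrite dotv_sg.
by rewrite Hu Hv dotvNl => E; lra.
Qed.

Lemma pm_fix w v : (forall c, c \in w -> dotv v c = 0) -> v *m pm w = v.
Proof.
elim: w v => [|a w IH] v H; first by rewrite pm_nil mulmx1.
rewrite pm_cons mulmxA refl_perp ?H ?mem_head //.
by apply: IH => c cw; apply: H; rewrite inE cw orbT.
Qed.

Lemma perp1 a : (forall u, u *m sg = - u -> dotv a u = 0) -> a *m sg = a.
Proof.
move=> H; set u := a - a *m sg.
have Hu : u *m sg = - u by rewrite /u mulmxBl -mulmxA hss mulmx1 opprB.
have h1 := H u Hu.
have h2 : dotv (a *m sg) u = 0 by rewrite dotv_sg Hu dotvNr h1 oppr0.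
have : dotv u u = 0 by rewrite {1}/u dotvBl h1 h2 subr0.
by move/eqP; rewrite dotv_eq0 subr_eq0 => /eqP.
Qed.

Lemma perp2 a : (forall u, u *m sg = u -> dotv a u = 0) -> a *m sg = - a.
Proof.
move=> H; set u := a + a *m sg.
have Hu : u *m sg = u by rewrite /u mulmxDl -mulmxA hss mulmx1 addrC.
have h1 := H u Hu.
have h2 : dotv (a *m sg) u = 0 by rewrite dotv_sg Hu h1.
have : dotv u u = 0 by rewrite {1}/u dotvDl h1 h2 addr0.
by move/eqP; rewrite dotv_eq0 addr_eq0 => /eqP Ea; rewrite {2}Ea opprK.
Qed.

Lemma mem_roots1 b : (b \in roots1 rs sg) = (b \in rs) && (b *m sg == - b).
Proof. by rewrite mem_filter andbC. Qed.
Lemma mem_roots2 b : (b \in roots2 rs sg) = (b \in rs) && (b *m sg == b).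
Proof. by rewrite mem_filter andbC. Qed.

Lemma R1_0 a : a \in roots1 rs sg -> a != 0.
Proof. by rewrite mem_roots1 => /andP [/rs0]. Qed.
Lemma R2_0 a : a \in roots2 rs sg -> a != 0.
Proof. by rewrite mem_roots2 => /andP [/rs0]. Qed.

Lemma R1_r a b : a \in roots1 rs sg -> b \in roots1 rs sg -> b *m refl a \in roots1 rs sg.
Proof.
rewrite !mem_roots1 => /andP [aR /eqP Ha] /andP [bR /eqP Hb].
rewrite rsr //= -mulmxA refl_comm; last by left.
by rewrite mulmxA Hb mulNmx.
Qed.
Lemma R2_r a b : a \in roots2 rs sg -> b \in roots2 rs sg -> b *m refl a \in roots2 rs sg.
Proof.
rewrite !mem_roots2 => /andP [aR /eqP Ha] /andP [bR /eqP Hb].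
rewrite rsr //= -mulmxA refl_comm; last by right.
by rewrite mulmxA Hb.
Qed.

Lemma comm_R1 w b : {subset w <= rs} -> pm w *m sg = sg *m pm w ->
  b \in roots1 rs sg -> b *m pm w \in roots1 rs sg.
Proof.
move=> wR Hc; rewrite !mem_roots1 => /andP [bR /eqP Hb].
rewrite (L_pm rsr wR bR) /= -mulmxA Hc mulmxA Hb mulNmx.
by [].
Qed.
Lemma comm_R2 w b : {subset w <= rs} -> pm w *m sg = sg *m pm w ->
  b \in roots2 rs sg -> b *m pm w \in roots2 rs sg.
Proof.
move=> wR Hc; rewrite !mem_roots2 => /andP [bR /eqP Hb].
by rewrite (L_pm rsr wR bR) /= -mulmxA Hc mulmxA Hb.
Qed.

Lemma R1_comm (w : seq 'rV[R]_n) : {subset w <= roots1 rs sg} -> pm w *m sg = sg *m pm w.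
Proof.
by move=> wR; apply: pm_comm => c /wR; rewrite mem_roots1 => /andP [_ /eqP ->]; left.
Qed.
Lemma R2_comm (w : seq 'rV[R]_n) : {subset w <= roots2 rs sg} -> pm w *m sg = sg *m pm w.
Proof.
by move=> wR; apply: pm_comm => c /wR; rewrite mem_roots2 => /andP [_ /eqP ->]; right.
Qed.

Lemma R1_rs (w : seq 'rV[R]_n) : {subset w <= roots1 rs sg} -> {subset w <= rs}.
Proof. by move=> wR c /wR; rewrite mem_roots1 => /andP []. Qed.
Lemma R2_rs (w : seq 'rV[R]_n) : {subset w <= roots2 rs sg} -> {subset w <= rs}.
Proof. by move=> wR c /wR; rewrite mem_roots2 => /andP []. Qed.


Lemma side (L : seq 'rV[R]_n) q M :
  (forall a, a \in L -> a != 0) ->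
  (forall a b, a \in L -> b \in L -> b *m refl a \in L) ->
  (forall a, a \in L -> dotv a q != 0) ->
  M *m M^T = 1%:M ->
  (forall b, b \in L -> b *m M \in L) -> (forall b, b \in L -> b *m M^T \in L) ->
  (forall b, b \in posr L q -> 0 <= dotv (q *m M^T) b) ->
  rho L q *m M = rho L q /\ forall c, c \in L -> dotv c (rho L q) != 0.
Proof.
move=> L0 Lr Lq HM HLM HLMt Hpos; split; last first.
  move=> c cL; case/orP: (dich L0 Lr Lq cL) => cP.
    by rewrite gt_eqF // (rho_gen L0 Lr Lq cP).
  by have := rho_gen L0 Lr Lq cP; rewrite dotvNl oppr_gt0 => /lt_eqF ->.
have HM' : M^T *m M = 1%:M by apply: mulmx1C.
have kP : forall b, b \in posr L q -> b *m M \in posr L q.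
  move=> b bP; have bL := posr_L bP.
  have E : dotv (b *m M) q = dotv (q *m M^T) b by rewrite dotv_mulmx dotvC.
  rewrite memP HLM //= E lt_def Hpos // andbT -E.
  by apply: Lq; apply: HLM.
have k'P : forall b, b \in posr L q -> b *m M^T \in posr L q.
  move=> b bP; have bL := posr_L bP.
  case/orP: (dich L0 Lr Lq (HLMt _ bL)) => // Hn.
  have := kP _ Hn; rewrite mulNmx -mulmxA HM' mulmx1.
  by rewrite posrN.
have Hperm : perm_eq (map (fun b => b *m M) (posr L q)) (posr L q).
  apply: uniq_perm.
  - rewrite map_inj_in_uniq ?uniq_posr //.
    move=> x y _ _ Hxy.
    by rewrite -(mulmx1 x) -HM mulmxA Hxy -mulmxA HM mulmx1.
  - exact: uniq_posr.
  move=> x; apply/mapP/idP => [[b bP ->]|xP]; first exact: kP.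
  by exists (x *m M^T); [apply: k'P | rewrite -mulmxA HM' mulmx1].
rewrite /rho mulmx_suml -[RHS](perm_big _ Hperm) big_map.
by [].
Qed.

Lemma spec_nz x1 x2 :
  special rs sg ->
  (forall c, c \in roots1 rs sg -> dotv c x1 != 0) ->
  (forall c, c \in roots2 rs sg -> dotv c x2 != 0) ->
  x1 *m sg = - x1 -> x2 *m sg = x2 ->
  forall a, a \in rs -> dotv a x1 != 0 \/ dotv a x2 != 0.
Proof.
move=> hsp H1 H2 hx1 hx2 a aR.
apply: NNPP => /not_or_and [/negP/negPn/eqP a1 /negP/negPn/eqP a2].
case: (hsp a aR) => [[w [[Vw Hw] Hpr]]|[w [[Vw Hw] Hpr]]].
- have w0 : w = 0.
    have wx : dotv w x1 = 0.
      by have := Hw x1 hx1; rewrite dotvBl a1 sub0r => /eqP; rewrite oppr_eq0 => /eqP.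
    case: Hpr => [[b [c [bR Ew]]]|[b [c [bR Ew]]]].
      move: wx; rewrite Ew dotvZl => /eqP; rewrite mulf_eq0 (negbTE (H1 _ bR)) orbF.
      by move=> /eqP ->; rewrite scale0r.
    move: bR; rewrite mem_roots2 => /andP [_ /eqP Hb].
    have : w *m sg = w by rewrite Ew -scalemxAl Hb.
    by rewrite Vw; apply: negeq0.
  have Ha : a *m sg = a.
    by apply: perp1 => u Hu; have := Hw u Hu; rewrite w0 subr0.
  by move: (H2 a); rewrite mem_roots2 aR Ha eqxx a2 eqxx => /(_ isT).
- have w0 : w = 0.
    have wx : dotv w x2 = 0.
      by have := Hw x2 hx2; rewrite dotvBl a2 sub0r => /eqP; rewrite oppr_eq0 => /eqP.
    case: Hpr => [[b [c [bR Ew]]]|[b [c [bR Ew]]]]; last first.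
      move: wx; rewrite Ew dotvZl => /eqP; rewrite mulf_eq0 (negbTE (H2 _ bR)) orbF.
      by move=> /eqP ->; rewrite scale0r.
    move: bR; rewrite mem_roots1 => /andP [_ /eqP Hb].
    have : w *m sg = - w by rewrite Ew -scalemxAl Hb scalerN.
    by rewrite Vw => /esym; apply: negeq0.
  have Ha : a *m sg = - a.
    by apply: perp2 => u Hu; have := Hw u Hu; rewrite w0 subr0.
  by move: (H1 a); rewrite mem_roots1 aR Ha eqxx a1 eqxx => /(_ isT).
Qed.


Lemma forward g : special rs sg -> reflgroup rs g -> g *m sg = sg *m g ->
  exists g1 g2, G1 rs sg g1 /\ G2 rs sg g2 /\ g = g1 *m g2.
Proof.
move=> hsp hg hgc.
have [wg [wgS Eg]] := (genmxP rs g).1 hg.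
have [q1 [Pq1 Hq1]] : exists v, v *m sg = - v /\
    forall a, a \in roots1 rs sg -> dotv a v != 0.
  apply: exists_reg.
  - by move=> u v Hu Hv; rewrite mulmxDl Hu Hv opprD.
  - by move=> c u Hu; rewrite -scalemxAl Hu scalerN.
  - by rewrite mul0mx oppr0.
  move=> a aR; split; last by rewrite dotv_eq0 R1_0.
  by move: aR; rewrite mem_roots1 => /andP [_ /eqP].
have [q2 [Pq2 Hq2]] : exists v, v *m sg = v /\
    forall a, a \in roots2 rs sg -> dotv a v != 0.
  apply: exists_reg.
  - by move=> u v Hu Hv; rewrite mulmxDl Hu Hv.
  - by move=> c u Hu; rewrite -scalemxAl Hu.
  - by rewrite mul0mx.
  move=> a aR; split; last by rewrite dotv_eq0 R2_0.
  by move: aR; rewrite mem_roots2 => /andP [_ /eqP].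
have [w1 [w1R Hw1]] := trans_gen R1_0 R1_r Hq1 (q1 *m g).
have [w2 [w2R Hw2]] := trans_gen R2_0 R2_r Hq2 (q2 *m g).
set wk := wg ++ w2 ++ w1.
have wkS : {subset wk <= rs}.
  move=> z; rewrite !mem_cat => /orP [/wgS //|/orP [/(R2_rs w2R)|/(R1_rs w1R)]] //.
have wkrS : {subset rev wk <= rs} by move=> z; rewrite mem_rev => /wkS.
have wk0 : forall z, z \in wk -> z != 0 by move=> z /wkS /rs0.
set k' := pm wk.
have Ek' : k' = g *m pm w2 *m pm w1 by rewrite /k' /wk !pm_cat Eg mulmxA.
set k := pm (rev wk).
have Ekt : k = k'^T by rewrite /k pm_tr.
have o1 : k' *m k = 1%:M by rewrite Ekt; apply: pm_orth.
have o2 : k *m k' = 1%:M by apply: mulmx1C.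
have ck' : k' *m sg = sg *m k'.
  rewrite Ek' -!mulmxA (R1_comm w1R) !mulmxA -(mulmxA g) (R2_comm w2R).
  by rewrite !mulmxA hgc.
have ck : k *m sg = sg *m k.
  by rewrite Ekt -{1}sg_sym -trmx_mul -ck' trmx_mul sg_sym.
have x1V : q1 *m g *m sg = - (q1 *m g) by rewrite -mulmxA hgc mulmxA Pq1 mulNmx.
have x2V : q2 *m g *m sg = q2 *m g by rewrite -mulmxA hgc mulmxA Pq2.
have q1k : q1 *m k' = q1 *m g *m pm w1.
  rewrite Ek' !mulmxA (pm_fix (w := w2)) // => c cw.
  apply: V12_perp => //; move: (w2R c cw); rewrite mem_roots2 => /andP [_ /eqP] //.
have q2k : q2 *m k' = q2 *m g *m pm w2.
  rewrite Ek' !mulmxA (pm_fix (w := w1)) // => c cw.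
  rewrite dotvC; apply: V12_perp.
    by move: (w1R c cw); rewrite mem_roots1 => /andP [_ /eqP].
  by rewrite -mulmxA (R2_comm w2R) mulmxA x2V.
have kR1 : forall b, b \in roots1 rs sg -> b *m k \in roots1 rs sg.
  by move=> b bR; apply: comm_R1.
have k'R1 : forall b, b \in roots1 rs sg -> b *m k^T \in roots1 rs sg.
  by move=> b bR; rewrite Ekt trmxK; apply: comm_R1.
have kR2 : forall b, b \in roots2 rs sg -> b *m k \in roots2 rs sg.
  by move=> b bR; apply: comm_R2.
have k'R2 : forall b, b \in roots2 rs sg -> b *m k^T \in roots2 rs sg.
  by move=> b bR; rewrite Ekt trmxK; apply: comm_R2.
have ok : k *m k^T = 1%:M by rewrite /k; apply: pm_orth => z; rewrite mem_rev; apply: wk0.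
have [rho1k rho1r] := side R1_0 R1_r Hq1 ok kR1 k'R1
  (ltac:(by move=> b bP; rewrite Ekt trmxK q1k; apply: Hw1)).
have [rho2k rho2r] := side R2_0 R2_r Hq2 ok kR2 k'R2
  (ltac:(by move=> b bP; rewrite Ekt trmxK q2k; apply: Hw2)).
set r1 := rho (roots1 rs sg) q1 in rho1k rho1r.
set r2 := rho (roots2 rs sg) q2 in rho2k rho2r.
have r1V : r1 *m sg = - r1.
  rewrite /r1 /rho mulmx_suml -sumrN big_seq [RHS]big_seq; apply: eq_bigr => b bP.
  by move: (posr_L bP); rewrite mem_roots1 => /andP [_ /eqP].
have r2V : r2 *m sg = r2.
  rewrite /r2 /rho mulmx_suml big_seq [RHS]big_seq; apply: eq_bigr => b bP.
  by move: (posr_L bP); rewrite mem_roots2 => /andP [_ /eqP].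
have Hnz := spec_nz hsp rho1r rho2r r1V r2V.
have [t Ht] : exists t, forall p, p \in [seq (dotv a r1, dotv a r2) | a <- rs] ->
    p.1 + t * p.2 != 0.
  by apply: exists_t => p /mapP [a aR ->] /=; apply: Hnz.
set qq := r1 + t *: r2.
have Hqq : forall a, a \in rs -> dotv a qq != 0.
  move=> a aR; rewrite dotvDr dotvZr.
  by apply: (Ht (dotv a r1, dotv a r2)); apply: map_f.
have qqk : qq *m k = qq by rewrite mulmxDl -scalemxAl rho1k rho2k.
have qqk' : qq *m k' = qq by rewrite -{1}qqk -mulmxA o2 mulmx1.
have k1 : k = 1%:M.
  apply: (free_gen rs0 rsr Hqq wkrS) => b bP.
  rewrite memP (L_pm rsr wkrS (posr_L bP)) /=.
  by rewrite dotv_mulmx pm_tr revK -/k' qqk' (posr_q bP).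
have k'1 : k' = 1%:M by rewrite -[k']trmxK -Ekt k1 trmx1.
exists (pm (rev w1)), (pm (rev w2)); split.
  apply/genmxP; exists (rev w1); split => // z; rewrite mem_rev; exact: w1R.
split.
  apply/genmxP; exists (rev w2); split => // z; rewrite mem_rev; exact: w2R.
have w10 : forall z, z \in w1 -> z != 0 by move=> z /w1R /R1_0.
have w20 : forall z, z \in w2 -> z != 0 by move=> z /w2R /R2_0.
rewrite -!pm_tr -trmx_mul.
set h := pm w2 *m pm w1.
have gh : g *m h = 1%:M by rewrite /h mulmxA -Ek' k'1.
have hh : h *m h^T = 1%:M.
  rewrite /h trmx_mul mulmxA -(mulmxA (pm w2)) pm_orth // mulmx1.
  exact: pm_orth.
by rewrite -[g]mulmx1 -hh mulmxA gh mul1mx.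
Qed.

Lemma backward g : (exists g1 g2, G1 rs sg g1 /\ G2 rs sg g2 /\ g = g1 *m g2) ->
  reflgroup rs g /\ g *m sg = sg *m g.
Proof.
move=> [g1 [g2 [hg1 [hg2 ->]]]].
have [w1 [w1R ->]] := (genmxP _ _).1 hg1.
have [w2 [w2R ->]] := (genmxP _ _).1 hg2.
split.
  apply/genmxP; exists (w1 ++ w2); split; last by rewrite pm_cat.
  by move=> z; rewrite mem_cat => /orP [/(R1_rs w1R)|/(R2_rs w2R)].
by rewrite -mulmxA (R2_comm w2R) !mulmxA (R1_comm w1R).
Qed.

End Sigma.

Unset Implicit Arguments.

Theorem proposition10 (R : realType) (n : nat) (rs : seq 'rV[R]_n) (sigma : 'M[R]_n) :
  root_system rs ->
  reflgroup rs sigma ->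
  sigma *m sigma = 1%:M ->
  special rs sigma ->
  forall g : 'M[R]_n,
    (reflgroup rs g /\ g *m sigma = sigma *m g) <->
    (exists g1 g2, G1 rs sigma g1 /\ G2 rs sigma g2 /\ g = g1 *m g2).
Proof.
move=> hR hs hss hsp g; split.
  by move=> [hg hgc]; apply: forward.
exact: backward.
Qed.
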